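(* Let $\kappa\geq 1$ be a cardinal and let $(S,\mu)$ be a multisemigroup with multiplicities bounded by $\kappa$. Let $S^\diamond$ be the set of all words in the alphabet $S$ of length at least two, and let $\overline{\mu}:S^\diamond\to \mathcal{B}_\kappa(S)$ be defined recursively by $\overline{\mu}_{st}=\mu_{s,t}$ for $s,t\in S$, and, for $w=sx$ with $s\in S$ and $x$ a word of length at least two, $$\overline{\mu}_w(t)=\sum_{a\in S}\overline{\mu}_x(a)\,\mu_{s,a}(t)\qquad (t\in S).$$ Then, for every $w\in S^\diamond$ of the form $w=xs$, where $s\in S$ and $x$ is a word of length at least two, we have $$\overline{\mu}_w(t)=\sum_{a\in S}\overline{\mu}_x(a)\,\mu_{a,s}(t)\qquad\text{for all } t\in S.$$
   Context: For a cardinal $\kappa\geq 1$, $\mathrm{Card}_\kappa$ denotes the set of all cardinals not greater than $\kappa$, made into a complete semiring: the sum of any family of elements is the cardinal sum (disjoint union) and the product is the cardinal product (Cartesian product), in both cases with the convention that any cardinal greater than $\kappa$ is identified with $\kappa$. For a set $X$, $\mathcal{B}_\kappa(X)$ is the set of all functions $X\to\mathrm{Card}_\kappa$ (with pointwise operations). For a cardinal $\lambda\le\kappa$ and a function $\nu:S\to\mathrm{Card}_\kappa$, $\lambda\nu$ denotes the sum of $\lambda$ copies of $\nu$ (computed pointwise in $\mathrm{Card}_\kappa$). A multisemigroup with multiplicities bounded by $\kappa$ is a pair $(S,\mu)$ where $S$ is a non-empty set and $\mu:S\times S\to\mathcal{B}_\kappa(S)$, $(s,t)\mapsto\mu_{s,t}$,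 satisfies, for all $r,s,t\in S$, the equality of functions $S\to\mathrm{Card}_\kappa$ $$\sum_{i\in S}\mu_{s,t}(i)\,\mu_{r,i}=\sum_{j\in S}\mu_{r,s}(j)\,\mu_{j,t}.$$ *)

(* Defs.v *)
From mathcomp Require Import all_boot.
Set Implicit Arguments. Unset Strict Implicit. Unset Printing Implicit Defensive.

(* Cardinals are represented by types.  A cardinal kappa >= 1 is a nonempty
   type K.  Cardinal sum over a family = sigma type, cardinal product = product
   type.  The semiring Card_kappa (cardinals > kappa identified with kappa) is
   the quotient of cardinals by the congruence [ceq K]: two cardinals are equal
   in Card_kappa iff they are equinumerous or both are >= kappa. *)

Definition card_le (A B : Type) : Prop := exists f : A -> B, injective f.
Definition card_eq (A B : Type) : Prop := exists f : A -> B, bijective f.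

Definition ceq (K A B : Type) : Prop :=
  card_eq A B \/ (card_le K A /\ card_le K B).

(* multiplicities: mu s t u = mu_{s,t}(u) *)
Definition multisemigroup (K S : Type) (mu : S -> S -> S -> Type) : Prop :=
  inhabited S /\
  (forall s t u, card_le (mu s t u) K) /\
  (forall r s t u,
     ceq K {i : S & (mu s t i * mu r i u)%type}
           {j : S & (mu r s j * mu j t u)%type}).

(* mubar a rest = \overline{mu}_{a :: rest}, defined for rest nonempty
   (junk value Empty_set for the one-letter word):
   mubar_{st} = mu_{s,t};  mubar_{s x}(t) = sum_c mubar_x(c) mu_{s,c}(t). *)
Fixpoint mubar (S : Type) (mu : S -> S -> S -> Type) (a : S) (rest : seq S)
  : S -> Type :=
  match rest with
  | [::] => fun _ => Empty_set
  | b :: rest' =>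
      match rest' with
      | [::] => mu a b
      | _ :: _ => fun t => {c : S & (mubar mu b rest' c * mu a c t)%type}
      end
  end.

(* Main.v *)
Require Import Defs.
From mathcomp Require Import all_boot.
From Stdlib Require Import Classical ClassicalEpsilon Eqdep.

Section Aux.
Variable K : Type.

Lemma cle_trans A B C : card_le A B -> card_le B C -> card_le A C.
Proof. move=> [f hf] [g hg]; exists (g \o f) => x y /= h; exact/hf/hg. Qed.

Lemma ceq_refl A : ceq K A A.
Proof. left; exists id; by exists id. Qed.

Lemma ceq_sym A B : ceq K A B -> ceq K B A.
Proof.
case=> [[f [g fg gf]]|[h1 h2]]; last by right.
by left; exists g; exists f.
Qed.

Lemma ceq_trans A B C : ceq K A B -> ceq K B C -> ceq K A C.
Proof.
case=> [[f [g fg gf]]|[h1 h2]]; case=> [[f' [g' fg' gf']]|[h3 h4]].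
- left; exists (f' \o f); exists (g \o g') => x /=; by rewrite ?fg ?fg' ?gf' ?gf.
- right; split=> //; apply: cle_trans h3 _; exists g => x y /= h.
  by rewrite -(gf x) -(gf y) h.
- right; split=> //; apply: cle_trans h2 _; exists f' => x y /= h.
  by rewrite -(fg' x) -(fg' y) h.
- by right.
Qed.

Lemma ceq_sig (I : Type) (F G : I -> Type) :
  (forall i, ceq K (F i) (G i)) -> ceq K {i : I & F i} {i : I & G i}.
Proof.
move=> H.
case: (classic (exists i, card_le K (F i) /\ card_le K (G i))).
  move=> [i [[f hf] [g hg]]]; right; split.
    exists (fun k => existT F i (f k)) => x y h.
    exact/hf/(inj_pairT2 _ _ _ _ _ h).
  exists (fun k => existT G i (g k)) => x y h.
  exact/hg/(inj_pairT2 _ _ _ _ _ h).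
move=> nH.
have H' : forall i, card_eq (F i) (G i).
  move=> i; case: (H i) => // hh; case: nH; by exists i.
pose f i := proj1_sig (constructive_indefinite_description _ (H' i)).
have bf0 i : bijective (f i) := proj2_sig (constructive_indefinite_description _ (H' i)).
have bf i : exists g, cancel (f i) g /\ cancel g (f i).
  by case: (bf0 i) => gg a b; exists gg.
pose g i := proj1_sig (constructive_indefinite_description _ (bf i)).
have fg i : cancel (f i) (g i) := proj1 (proj2_sig (constructive_indefinite_description _ (bf i))).
have gf i : cancel (g i) (f i) := proj2 (proj2_sig (constructive_indefinite_description _ (bf i))).
left; exists (fun p => existT G (projT1 p) (f _ (projT2 p))).
exists (fun p => existT F (projT1 p) (g _ (projT2 p))).
  by case=> i x /=; rewrite fg.
by case=> i x /=; rewrite gf.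
Qed.

Lemma ceq_prod A A' B B' : inhabited K ->
  ceq K A A' -> ceq K B B' -> ceq K (A * B) (A' * B').
Proof.
move=> [k0].
case=> [[f [g fg gf]]|[[f hf] [f' hf']]]; case=> [[h [j hj jh]]|[[e he] [e' he']]].
- left; exists (fun p => (f p.1, h p.2)); exists (fun p => (g p.1, j p.2));
  by case=> x y /=; rewrite ?fg ?hj ?gf ?jh.
- case: (classic (inhabited A)) => [[x]|nA].
    right; split.
      exists (fun k => (x, e k)) => u v [] ; exact: he.
    exists (fun k => (f x, e' k)) => u v [] ; exact: he'.
  have nA' : ~ inhabited A' by move=> [y]; apply: nA; exact: inhabits (g y).
  left; exists (fun p : A * B => False_rect _ (nA (inhabits p.1))).
  exists (fun p : A' * B' => match nA' (inhabits p.1) with end).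
    by move=> p; case: (nA (inhabits p.1)).
  by move=> p; case: (nA' (inhabits p.1)).
- case: (classic (inhabited B)) => [[x]|nB].
    right; split.
      exists (fun k => (f k, x)) => u v [] ; exact: hf.
    exists (fun k => (f' k, h x)) => u v [] ; exact: hf'.
  have nB' : ~ inhabited B' by move=> [y]; apply: nB; exact: inhabits (j y).
  left; exists (fun p : A * B => False_rect _ (nB (inhabits p.2))).
  exists (fun p : A' * B' => match nB' (inhabits p.2) with end).
    by move=> p; case: (nB (inhabits p.2)).
  by move=> p; case: (nB' (inhabits p.2)).
- right; split.
    exists (fun k => (f k, e k)) => u v [] h1 _; exact: hf.
  exists (fun k => (f' k, e' k)) => u v [] h1 _; exact: hf'.
Qed.
End Aux.

Theorem proposition5 (K S : Type) (mu : S -> S -> S -> Type)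
  (hK : inhabited K) (hmu : multisemigroup K mu)
  (a b : S) (l : seq S) (s t : S) :
  ceq K (mubar mu a (rcons (b :: l) s) t)
        {c : S & (mubar mu a (b :: l) c * mu c s t)%type}.
Proof.
case: hmu => _ [_ hass].
elim: l a b t => [|c l IH] a b t.
  exact: hass.
rewrite [rcons _ _]/=.
change (ceq K {d : S & (mubar mu b (rcons (c :: l) s) d * mu a d t)%type}
  {d : S & ({e : S & (mubar mu b (c :: l) e * mu a e d)%type} * mu d s t)%type}).
apply: (@ceq_trans K _ {d : S & ({e : S & (mubar mu b (c :: l) e * mu e s d)%type} * mu a d t)%type}).
  apply: ceq_sig => d; apply: ceq_prod; [exact: hK | exact: IH | exact: ceq_refl].
apply: (@ceq_trans K _ {e : S & (mubar mu b (c :: l) e * {d : S & (mu e s d * mu a d t)%type})%type}).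
  left.
  exists (fun p => match p with existT d (existT e (x, m), n) => existT _ e (x, existT _ d (m, n)) end).
  exists (fun p => match p with existT e (x, existT d (m, n)) => existT _ d (existT _ e (x, m), n) end).
    by case=> d [[e [x m]] n].
  by case=> e [x [d [m n]]].
apply: (@ceq_trans K _ {e : S & (mubar mu b (c :: l) e * {d : S & (mu a e d * mu d s t)%type})%type}).
  apply: ceq_sig => e; apply: ceq_prod; [exact: hK | exact: ceq_refl | exact: hass].
left.
exists (fun p => match p with existT e (x, existT d (m, n)) => existT _ d (existT _ e (x, m), n) end).
exists (fun p => match p with existT d (existT e (x, m), n) => existT _ e (x, existT _ d (m, n)) end).
  by case=> e [x [d [m n]]].
by case=> d [[e [x m]] n].
Qed.
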